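(* In the free group $\mathbb{F}_2$ on $a,b$, set $a_0:=b^{-1}$, $b_0:=aba^{-1}$ and recursively $a_n:=a_{n-1}b_{n-1}$, $b_n:=a_{n-1}^{-1}b_{n-1}^{-1}$ for $n\ge1$. Let $\sigma,\tau\in\mathrm{Aut}(\mathbb{F}_2)$ be defined by $\sigma(a)=a^{-1},\sigma(b)=b^{-1}$ and $\tau(a)=a,\tau(b)=b^{-1}$. Let $n\in\mathbb{N}$. Then: (1) if $n\equiv0\pmod3$, then $a\,\sigma(a_n)\,a^{-1}=b_n$ (and so $a_n=a\,\sigma(b_n)\,a^{-1}$); (2) if $n\equiv1\pmod3$, then $\tau(a_n)=b_n$ (and so $\tau(b_n)=a_n$); (3) if $n\equiv2\pmod3$, then $\tau(a_n)=b_n^{-1}$. *)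

(* Defs.v *)
(* The free group F_2 on {a, b}, realized as
   words over the alphabet {a, a^-1, b, b^-1} modulo free reduction. *)
From mathcomp Require Import all_boot.
Set Implicit Arguments. Unset Strict Implicit. Unset Printing Implicit Defensive.

(* A letter (g, e): g = false for a, g = true for b; e = true means inverse. *)
Definition letter := (bool * bool)%type.
Definition la  : letter := (false, false).
Definition lai : letter := (false, true).
Definition lb  : letter := (true, false).
Definition lbi : letter := (true, true).

Definition word := seq letter.

Definition inv_letter (x : letter) : letter := (x.1, ~~ x.2).

Definition push (x : letter) (s : word) : word :=
  match s with
  | y :: s' => if y == inv_letter x then s' else x :: s
  | [::] => [:: x]
  end.

Definition reduce (w : word) : word := foldr push [::] w.

Definition eqF2 (u v : word) : Prop := reduce u = reduce v.

Definition wmul (u v : word) : word := u ++ v.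
Definition winv (u : word) : word := rev (map inv_letter u).

Definition ga : word := [:: la].
Definition gb : word := [:: lb].

Definition hom (fa fb : word) (w : word) : word :=
  flatten (map (fun x : letter =>
     let img := if x.1 then fb else fa in
     if x.2 then winv img else img) w).

Definition sigma (w : word) : word := hom (winv ga) (winv gb) w.
Definition tau (w : word) : word := hom ga (winv gb) w.

Fixpoint ab (n : nat) : word * word :=
  match n with
  | 0 => (winv gb, wmul ga (wmul gb (winv ga)))
  | n'.+1 => let (a', b') := ab n' in (wmul a' b', wmul (winv a') (winv b'))
  end.

Definition an (n : nat) : word := (ab n).1.
Definition bn (n : nat) : word := (ab n).2.

(* Main.v *)
Require Import Defs.
From mathcomp Require Import all_boot.

Definition reduced (s : word) := sorted (fun x y : letter => y != inv_letter x) s.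

Lemma inv_letterK : involutive inv_letter.
Proof. by case=> g e; rewrite /inv_letter /= negbK. Qed.

Lemma push_reduced x s : reduced s -> reduced (push x s).
Proof.
case: s => [|y s] //= H.
case: eqP => [_|/eqP ne]; first exact: path_sorted H.
by rewrite /reduced /= ne H.
Qed.

Lemma reduce_reduced w : reduced (reduce w).
Proof. by elim: w => //= x w IH; apply: push_reduced. Qed.

Lemma push_cancel x s : reduced s -> push x (push (inv_letter x) s) = s.
Proof.
case: s => [|y s] /= H; first by rewrite ?inv_letterK eqxx.
case: (y =P inv_letter (inv_letter x)) => [|ne].
  rewrite inv_letterK => ey; subst y.
  case: s H => [|z s] //= /andP [nz _].
  by rewrite (negbTE nz).
by rewrite /= eqxx.
Qed.

Lemma foldr_reduced t u : reduced t -> reduced (foldr push t u).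
Proof. by move=> Ht; elim: u => //= x u IH; apply: push_reduced. Qed.

Lemma push_step t x r : reduced t ->
  foldr push t (push x r) = push x (foldr push t r).
Proof.
move=> Ht; case: r => [|y r] //=.
case: eqP => [ey|_] //; subst y.
by rewrite push_cancel // foldr_reduced.
Qed.

Lemma foldr_push_reduce t u : reduced t -> foldr push t u = foldr push t (reduce u).
Proof.
move=> Ht; elim: u => //= x u IH.
by rewrite push_step // IH.
Qed.

Lemma reduce_cat u v : reduce (u ++ v) = foldr push (reduce v) (reduce u).
Proof.
rewrite /reduce foldr_cat -/(reduce v).
by rewrite (@foldr_push_reduce _ _ (reduce_reduced v)).
Qed.

Lemma reduceK u : reduce (reduce u) = reduce u.
Proof. by have := reduce_cat u [::]; rewrite cats0 /=. Qed.

Lemma eqF2_cat u u' v v' : eqF2 u u' -> eqF2 v v' -> eqF2 (u ++ v) (u' ++ v').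
Proof. by rewrite /eqF2 !reduce_cat => -> ->. Qed.

Lemma reduce_nil_r u v : reduce v = [::] -> reduce (u ++ v) = reduce u.
Proof. by move=> H; rewrite reduce_cat H -/(reduce (reduce u)) reduceK. Qed.

Lemma reduce_nil_l u v : reduce u = [::] -> reduce (u ++ v) = reduce v.
Proof. by move=> H; rewrite reduce_cat H. Qed.

Lemma reduce_mid X w Y : reduce w = [::] -> reduce (X ++ w ++ Y) = reduce (X ++ Y).
Proof. by move=> H; rewrite !(reduce_cat X) reduce_nil_l. Qed.

Lemma winv_cat u v : winv (u ++ v) = winv v ++ winv u.
Proof. by rewrite /winv map_cat rev_cat. Qed.

Lemma winvK u : winv (winv u) = u.
Proof. by rewrite /winv map_rev revK -map_comp map_id_in // => x _ /=; rewrite inv_letterK. Qed.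

Lemma winv_cons x u : winv (x :: u) = winv u ++ [:: inv_letter x].
Proof. by rewrite /winv /= rev_cons cats1. Qed.

Lemma reduce_mulV u : reduce (u ++ winv u) = [::].
Proof.
elim: u => // x u IH.
rewrite winv_cons cat_cons /= catA reduce_nil_l //=.
by rewrite eqxx.
Qed.

Lemma reduce_Vmul u : reduce (winv u ++ u) = [::].
Proof. by have := reduce_mulV (winv u); rewrite winvK. Qed.

Lemma eqF2_winv u v : eqF2 u v -> eqF2 (winv u) (winv v).
Proof.
move=> H; rewrite /eqF2.
rewrite -(@reduce_nil_r (winv u) _ (reduce_mulV v)) catA.
rewrite reduce_cat.
have -> : reduce (winv u ++ v) = [::] by rewrite reduce_cat -H -reduce_cat reduce_Vmul.
by [].
Qed.

Lemma hom_cat fa fb u v : hom fa fb (u ++ v) = hom fa fb u ++ hom fa fb v.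
Proof. by rewrite /hom map_cat flatten_cat. Qed.

Lemma hom_winv fa fb u : hom fa fb (winv u) = winv (hom fa fb u).
Proof.
elim: u => [|x u IH] //.
rewrite winv_cons hom_cat IH.
have -> : hom fa fb (x :: u) = (if x.2 then winv (if x.1 then fb else fa) else (if x.1 then fb else fa)) ++ hom fa fb u by [].
rewrite winv_cat; congr (_ ++ _).
by case: x => g [] ; rewrite /hom /inv_letter /= ?winvK ?cats0.
Qed.

Definition img (fa fb : word) (x : letter) : word :=
  if x.2 then winv (if x.1 then fb else fa) else (if x.1 then fb else fa).

Lemma hom_cons fa fb x w : hom fa fb (x :: w) = img fa fb x ++ hom fa fb w.
Proof. by []. Qed.

Lemma img_inv fa fb x : reduce (img fa fb x ++ img fa fb (inv_letter x)) = [::].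
Proof. by case: x => g [] ; rewrite /img /= ?reduce_mulV ?reduce_Vmul. Qed.

Lemma hom_reduce fa fb u : reduce (hom fa fb u) = reduce (hom fa fb (reduce u)).
Proof.
elim: u => [|x u IH] //.
rewrite hom_cons reduce_cat IH -reduce_cat -hom_cons /=.
case: (reduce u) => [|y r] //=.
case: eqP => [ey|_] //; subst y.
by rewrite !hom_cons catA reduce_nil_l // img_inv.
Qed.

Lemma eqF2_hom fa fb u v : eqF2 u v -> eqF2 (hom fa fb u) (hom fa fb v).
Proof. by rewrite /eqF2 => H; rewrite hom_reduce [RHS]hom_reduce H. Qed.

Definition morph (f : word -> word) :=
  [/\ (forall u v, eqF2 u v -> eqF2 (f u) (f v)),
      (forall u v, eqF2 (f (u ++ v)) (f u ++ f v)) &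
      (forall u, eqF2 (f (winv u)) (winv (f u)))].

Lemma morph_hom fa fb : morph (hom fa fb).
Proof.
split; first exact: eqF2_hom.
  by move=> u v; rewrite hom_cat.
by move=> u; rewrite hom_winv.
Qed.

Definition phi (u : word) : word := wmul ga (wmul (sigma u) (winv ga)).

Lemma morph_phi : morph phi.
Proof.
split.
- move=> u v H; rewrite /phi /wmul.
  apply: eqF2_cat => //; apply: eqF2_cat => //; exact: eqF2_hom.
- move=> u v; rewrite /phi /wmul /sigma hom_cat /eqF2.
  have H := @reduce_mid (ga ++ hom (winv ga) (winv gb) u) (winv ga ++ ga)
     (hom (winv ga) (winv gb) v ++ winv ga) (reduce_Vmul ga).
  rewrite -!catA in H; by rewrite -!catA H.
- move=> u; rewrite /phi /wmul /sigma hom_winv /eqF2.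
  by rewrite !winv_cat winvK catA.
Qed.

Lemma an_S n : an n.+1 = an n ++ bn n.
Proof. by rewrite /an /bn /=; case: (ab n). Qed.
Lemma bn_S n : bn n.+1 = winv (an n) ++ winv (bn n).
Proof. by rewrite /an /bn /=; case: (ab n). Qed.

Lemma eqF2_trans u v w : eqF2 u v -> eqF2 v w -> eqF2 u w.
Proof. by rewrite /eqF2 => -> ->. Qed.

Lemma step f n P Q : morph f -> eqF2 (f (an n)) P -> eqF2 (f (bn n)) Q ->
  eqF2 (f (an n.+1)) (P ++ Q) /\ eqF2 (f (bn n.+1)) (winv P ++ winv Q).
Proof.
case=> Hc Hm Hi HP HQ; rewrite an_S bn_S; split.
  by apply: eqF2_trans (Hm _ _) _; apply: eqF2_cat.
apply: eqF2_trans (Hm _ _) _; apply: eqF2_cat.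
  by apply: eqF2_trans (Hi _) _; apply: eqF2_winv.
by apply: eqF2_trans (Hi _) _; apply: eqF2_winv.
Qed.

Lemma step3 f n : morph f -> eqF2 (f (an n)) (bn n) -> eqF2 (f (bn n)) (an n) ->
  eqF2 (f (an n.+3)) (bn n.+3) /\ eqF2 (f (bn n.+3)) (an n.+3).
Proof.
move=> Hf HA HB.
have [A1 B1] := @step f _ _ _ Hf HA HB.
have [A2 B2] := @step f _ _ _ Hf A1 B1.
have [A3 B3] := @step f _ _ _ Hf A2 B2.
split.
  apply: eqF2_trans A3 _.
  by rewrite /eqF2 !(an_S, bn_S) !winv_cat !winvK -!catA.
apply: eqF2_trans B3 _.
by rewrite /eqF2 !(an_S, bn_S) !winv_cat !winvK -!catA.
Qed.

Lemma eqF2_sym u v : eqF2 u v -> eqF2 v u.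
Proof. by []. Qed.

Lemma main_ind k :
  (eqF2 (phi (an (3 * k))) (bn (3 * k)) /\ eqF2 (phi (bn (3 * k))) (an (3 * k))) /\
  (eqF2 (tau (an (3 * k).+1)) (bn (3 * k).+1) /\ eqF2 (tau (bn (3 * k).+1)) (an (3 * k).+1)).
Proof.
elim: k => [|k [[A B] [C D]]].
  by split; split; vm_compute.
rewrite mulnS.
split.
  by apply: step3 => //; exact: morph_phi.
by apply: (@step3 tau) => //; exact: morph_hom.
Qed.

Theorem lemma2p3 (n : nat) :
  (n %% 3 = 0 ->
     eqF2 (wmul ga (wmul (sigma (an n)) (winv ga))) (bn n) /\
     eqF2 (an n) (wmul ga (wmul (sigma (bn n)) (winv ga)))) /\
  (n %% 3 = 1 ->
     eqF2 (tau (an n)) (bn n) /\ eqF2 (tau (bn n)) (an n)) /\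
  (n %% 3 = 2 ->
     eqF2 (tau (an n)) (winv (bn n))).
Proof.
rewrite [in an n](divn_eq n 3) [in bn n](divn_eq n 3) mulnC.
set k := n %/ 3.
have [[A B] [C D]] := main_ind k.
split; [|split] => ->; rewrite ?addn0 ?addn1.
- by split; [exact: A | exact: eqF2_sym B].
- by split.
rewrite addn2.
have [E _] := @step tau _ _ _ (morph_hom ga (winv gb)) C D.
apply: eqF2_trans E _.
by rewrite /eqF2 (bn_S (3 * k).+1) winv_cat !winvK.
Qed.
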